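(* Let $I$ and $J$ be finite index sets, let $X=\{x_i\}_{i\in I}$ be a finite set of player types and $Y=\{y_j\}_{j\in J}$ a finite set of strategies. Let $\mu=\{\mu_i\}_{i\in I}$ with $\mu_i\ge 0$ and $\sum_{i\in I}\mu_i=1$ be the given distribution of types. Let $c=\{c_{ij}\}\in\mathbb{R}^{I\times J}$, let each $f_j:\mathbb{R}_+\to\mathbb{R}$ ($j\in J$) be nondecreasing and continuous with primitive $F_j(t)=\int_0^t f_j(s)\,ds$, and let $\phi=\{\phi_{kj}\}\in\mathbb{R}^{J\times J}$ be symmetric. For $\nu\in\mathcal{P}(Y):=\{\nu\in\mathbb{R}_+^J:\sum_{j\in J}\nu_j=1\}$ define the cost $$\Psi_{ij}[\nu]:=c_{ij}+f_j(\nu_j)+\sum_{k\in J}\phi_{kj}\nu_k,$$ the set of transport plans $$\Pi(\mu,\nu):=\Big\{\gamma\in\mathbb{R}_+^{I\times J}:\ \sum_{j\in J}\gamma_{ij}=\mu_i\ \forall i\in I,\ \sum_{i\in I}\gamma_{ij}=\nu_j\ \forall j\in J\Big\},$$ the optimal transport value $\mathrm{MK}(\nu):=\inf_{\gamma\in\Pi(\mu,\nu)}\sum_{i,j}c_{ij}\gamma_{ij}$, and the energy $$E(\nu):=\sum_{j\in J}F_j(\nu_j)+\frac12\sum_{k,j\in J}\phi_{kj}\nu_k\nu_j.$$ Let $\nu$ be a minimizer of $\mathrm{MK}(\nu)+E(\nu)$ over $\nu\in\mathcal{P}(Y)$, and let $\gamma\in\Pi(\mu,\nu)$ satisfy $\sum_{i,j}c_{ij}\gamma_{ij}=\mathrm{MK}(\nu)$.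 Then $\gamma$ is a Cournot-Nash equilibrium, i.e. $\gamma\in\mathbb{R}_+^{I\times J}$, $\sum_{j\in J}\gamma_{ij}=\mu_i$ for all $i\in I$, and, with $\nu_j=\sum_{i\in I}\gamma_{ij}$, for all $(i,j)\in I\times J$, $$\gamma_{ij}>0\ \Longrightarrow\ \Psi_{ij}[\nu]=\min_{k\in J}\Psi_{ik}[\nu].$$ In particular, a Cournot-Nash equilibrium exists.
   Context: A Cournot-Nash equilibrium is a matrix $\gamma\in\mathbb{R}_+^{I\times J}$ ($\gamma_{ij}$ being the probability that a player of type $x_i$ chooses strategy $y_j$) whose first marginal is $\mu$ (i.e. $\sum_{j}\gamma_{ij}=\mu_i$ for all $i$) and such that, denoting by $\nu=\{\sum_i\gamma_{ij}\}_{j\in J}$ its second marginal, $\gamma_{ij}>0$ implies $\Psi_{ij}[\nu]=\min_{k\in J}\Psi_{ik}[\nu]$. *)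

(* Defs.v *)
From HB Require Import structures.
From mathcomp Require Import all_boot all_order all_algebra.
From mathcomp Require Import all_classical all_reals all_analysis.
Set Implicit Arguments. Unset Strict Implicit. Unset Printing Implicit Defensive.
Import Order.TTheory GRing.Theory Num.Theory numFieldNormedType.Exports.
Local Open Scope classical_set_scope.
Local Open Scope ring_scope.

Section CournotNash.
Variables (R : realType) (I J : finType).

Definition probvec (nu : J -> R) : Prop :=
  (forall j, 0 <= nu j) /\ \sum_(j : J) nu j = 1.

Definition plans (mu : I -> R) (nu : J -> R) : set (I -> J -> R) :=
  [set g | (forall i j, 0 <= g i j) /\
           (forall i, \sum_(j : J) g i j = mu i) /\
           (forall j, \sum_(i : I) g i j = nu j)].

Definition tcost (c : I -> J -> R) (g : I -> J -> R) : R :=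
  \sum_(i : I) \sum_(j : J) c i j * g i j.

Definition MK (mu : I -> R) (c : I -> J -> R) (nu : J -> R) : R :=
  inf [set tcost c g | g in plans mu nu].

Definition primitive (f : R -> R) (t : R) : R :=
  Rintegral lebesgue_measure `[0, t] f.

Definition energy (f : J -> R -> R) (phi : J -> J -> R) (nu : J -> R) : R :=
  \sum_(j : J) primitive (f j) (nu j)
  + 2^-1 * \sum_(k : J) \sum_(j : J) phi k j * nu k * nu j.

Definition Psi (c : I -> J -> R) (f : J -> R -> R) (phi : J -> J -> R)
  (nu : J -> R) (i : I) (j : J) : R :=
  c i j + f j (nu j) + \sum_(k : J) phi k j * nu k.

Definition marg2 (g : I -> J -> R) : J -> R := fun j => \sum_(i : I) g i j.

(* Cournot-Nash equilibrium; "Psi_ij = min_k Psi_ik" is written as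
   Psi_ij <= Psi_ik for all k (the min over the finite J, attained at j). *)
Definition CournotNash (mu : I -> R) (c : I -> J -> R) (f : J -> R -> R)
  (phi : J -> J -> R) (g : I -> J -> R) : Prop :=
  (forall i j, 0 <= g i j) /\
  (forall i, \sum_(j : J) g i j = mu i) /\
  (forall i j, 0 < g i j ->
     forall k, Psi c f phi (marg2 g) i j <= Psi c f phi (marg2 g) i k).

End CournotNash.

(* Main.v *)
Require Import Defs.
From HB Require Import structures.
From mathcomp Require Import all_boot all_order all_algebra.
From mathcomp Require Import all_classical all_reals all_analysis.
From mathcomp Require Import ring lra.
Import Order.TTheory GRing.Theory Num.Theory numFieldNormedType.Exports.
Local Open Scope classical_set_scope.
Local Open Scope ring_scope.
Section L.
Variable R : realType.
Implicit Types f : R -> R.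

Lemma prim_diff f s t :
  {in `[0, +oo[ &, {homo f : x y / x <= y}} ->
  {within [set x : R | 0 <= x], continuous f} ->
  0 <= s -> s <= t ->
  f s * (t - s) <= primitive f t - primitive f s <= f t * (t - s).
Proof.
move=> fnd fc s0 st.
have it0 : lebesgue_measure.-integrable `[0, t] (EFin \o f).
  apply: continuous_compact_integrable; first exact: segment_compact.
  apply: continuous_subspaceW fc => x /=; rewrite in_itv /= => /andP[] //.
have -> : primitive f t - primitive f s =
   \int[lebesgue_measure]_(x in [set` Interval (BRight s) (BRight t)]) f x.
  rewrite /primitive Rintegral_itvB //; rewrite bnd_simp //.
have sub : [set` Interval (BRight s) (BRight t)] `<=` `[0, t].
  apply: subset_itvr; rewrite bnd_simp //.
have its : lebesgue_measure.-integrable [set` Interval (BRight s) (BRight t)] (EFin \o f).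
  by apply: integrableS it0.
have ic (k : R) : lebesgue_measure.-integrable [set` Interval (BRight s) (BRight t)] (EFin \o (fun _ => k)).
  have ick : lebesgue_measure.-integrable `[0, t] (EFin \o (fun _ => k)).
    apply: continuous_compact_integrable; first exact: segment_compact.
    apply: continuous_subspaceT => x; exact: cst_continuous.
  by apply: integrableS ick.
have flm : fine (lebesgue_measure ([set` Interval (BRight s) (BRight t)] : set R)) = t - s.
  rewrite lebesgue_measure_itv /= lte_fin.
  case: (ltrP s t) => [_|ts] /=; first by [].
  have -> : t = s by apply/le_anti; rewrite ts st.
  by rewrite subrr.
have mst k : \int[lebesgue_measure]_(x in [set` Interval (BRight s) (BRight t)]) k = k * (t - s).
  by rewrite Rintegral_cst //; congr (_ * _); exact: flm.
apply/andP; split.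
- rewrite -mst; apply: le_Rintegral => //.
  move=> x /=; rewrite in_itv /= => /andP[sx xt]; apply: fnd; rewrite ?in_itv /= ?s0 //.
    by rewrite (le_trans s0) // ltW.
  by rewrite ltW.
- rewrite -mst; apply: le_Rintegral => //.
  move=> x /=; rewrite in_itv /= => /andP[sx xt]; apply: fnd; rewrite ?in_itv /= ?andbT //.
    by rewrite (le_trans s0) // ltW.
  by rewrite (le_trans s0).
Qed.
End L.
Section P2.
Variables (R : realType).

Lemma lip_cont (h : R -> R) (M : R) : 0 <= M ->
  (forall x y, h x - h y <= M * `|x - y|) -> continuous h.
Proof.
move=> M0 Hh x; apply/cvgrPdist_lt => e e0.
apply/nbhs_ballP; exists (e / (M + 1)) => [|y]; first by rewrite /= divr_gt0 // ltr_wpDl.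
rewrite /ball /= => xy.
have a1 := Hh x y; have a2 := Hh y x; rewrite distrC in a2.
have a3 : `|h x - h y| <= M * `|x - y|.
  by rewrite ler_norml a1 andbT lerNl opprB.
have a4 : M * `|x - y| <= M * (e / (M + 1)) by rewrite ler_wpM2l // ltW.
have a5 : M * (e / (M + 1)) < e.
  rewrite mulrA ltr_pdivrMr ?ltr_wpDl //; nra.
lra.
Qed.

Definition clamp (t : R) : R := if t <= 0 then 0 else if t <= 1 then t else 1.

Lemma clamp01 t : 0 <= clamp t <= 1.
Proof. rewrite /clamp; case: ifP => t0; first by rewrite lexx ler01. case: ifP => t1; lra. Qed.

Lemma clamp_id t : 0 <= t <= 1 -> clamp t = t.
Proof. move=> /andP[t0 t1]; rewrite /clamp t1; case: ifP => tt //; lra. Qed.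

Lemma clamp_lip x y : clamp x - clamp y <= `|x - y|.
Proof.
have h1 := ler_norm (x - y); have h2 := normr_ge0 (x - y).
rewrite /clamp; case: (leP x 0) => x0; case: (leP y 0) => y0; case: (leP x 1) => x1; case: (leP y 1) => y1; lra.
Qed.

Lemma Fc_lip (f : R -> R) :
  {in `[0, +oo[ &, {homo f : x y / x <= y}} ->
  {within [set x : R | 0 <= x], continuous f} ->
  forall x y, primitive f (clamp x) - primitive f (clamp y) <= (`|f 0| + `|f 1|) * `|x - y|.
Proof.
move=> fnd fc x y.
have cl := clamp_lip x y; have cl' := clamp_lip y x; rewrite distrC in cl'.
have /andP[x0 x1] := clamp01 x; have /andP[y0 y1] := clamp01 y.
have in0 (t : R) : 0 <= t -> t \in `[0, +oo[ by move=> t0; rewrite in_itv /= t0.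
have fb t : 0 <= t <= 1 -> - (`|f 0| + `|f 1|) <= f t <= `|f 0| + `|f 1|.
  move=> /andP[t0 t1].
  have := fnd 0 t (in0 _ (lexx 0)) (in0 _ t0) t0.
  have := fnd t 1 (in0 _ t0) (in0 _ ler01) t1.
  have := ler_norm (f 1); have := ler_norm (- f 0); rewrite normrN.
  have := normr_ge0 (f 0); have := normr_ge0 (f 1).
  move=> *; apply/andP; split; lra.
have M0 : 0 <= `|f 0| + `|f 1| by rewrite addr_ge0.
case: (leP (clamp y) (clamp x)) => yx.
  have /andP[_ P] := @prim_diff R _ _ _ fnd fc y0 yx.
  have /andP[_ fx] := fb (clamp x) (introT andP (conj x0 x1)).
  nra.
have /andP[P _] := @prim_diff R _ _ _ fnd fc x0 (ltW yx).
have /andP[fx _] := fb (clamp x) (introT andP (conj x0 x1)).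
nra.
Qed.


Lemma cont_sum (T : topologicalType) (X : finType) (F : X -> T -> R) :
  (forall x, continuous (F x)) -> continuous (fun t => \sum_(x : X) F x t).
Proof.
move=> Fc; apply: (@continuous_big _ _ +%R 0 xpredT _ T (index_enum X) F) => //.
exact: add_continuous.
Qed.

Lemma cont_mul (T : topologicalType) (s t : T -> R) :
  continuous s -> continuous t -> continuous (fun x => s x * t x).
Proof. move=> sc tc x; apply: cvgM; [exact: sc | exact: tc]. Qed.

Lemma cont_add (T : topologicalType) (s t : T -> R) :
  continuous s -> continuous t -> continuous (fun x => s x + t x).
Proof. move=> sc tc x; apply: cvgD; [exact: sc | exact: tc]. Qed.

End P2.
Arguments clamp {R}.
Arguments clamp_id {R}.
Arguments clamp01 {R}.
Arguments Fc_lip {R}.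
Arguments lip_cont {R}.
Arguments cont_sum {R T X}.
Arguments cont_mul {R T}.
Arguments cont_add {R T}.

Section Ex.
Variables (R : realType) (I J : finType).
Variables (mu : I -> R) (c : I -> J -> R) (f : J -> R -> R) (phi : J -> J -> R).
Hypothesis mu_ge0 : forall i, 0 <= mu i.
Hypothesis mu_sum : \sum_(i : I) mu i = 1.
Hypothesis f_nondecr : forall j, {in `[0, +oo[ &, {homo f j : s t / s <= t}}.
Hypothesis f_cont : forall j, {within [set x : R | 0 <= x], continuous (f j)}.

Definition Gam (g : I -> J -> R) := (forall i j, 0 <= g i j) /\ (forall i, \sum_(j : J) g i j = mu i).
Definition Gfun (g : I -> J -> R) := tcost c g + energy f phi (marg2 g).
Definition Gc (g : I -> J -> R) := tcost c g +
  (\sum_(l : J) primitive (f l) (clamp (marg2 g l))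
   + 2^-1 * \sum_(a : J) \sum_(b : J) phi a b * marg2 g a * marg2 g b).

Lemma Gam_le1 g : Gam g -> forall i j, g i j <= mu i /\ mu i <= 1.
Proof.
move=> [g0 gmu] i j; split.
  by rewrite -gmu (bigD1 j) //= lerDl; apply: sumr_ge0 => l _; exact: g0.
by rewrite -mu_sum (bigD1 i) //= lerDl; apply: sumr_ge0 => l _; exact: mu_ge0.
Qed.

Lemma Gc_eq g : Gam g -> Gc g = Gfun g.
Proof.
move=> [g0 gmu]; rewrite /Gc /Gfun /energy; congr (_ + (_ + _)).
apply: eq_bigr => l _; rewrite clamp_id //.
apply/andP; split; first by apply: sumr_ge0 => i _; exact: g0.
rewrite -mu_sum /marg2; apply: ler_sum => i _.
by rewrite -gmu (bigD1 l) //= lerDl; apply: sumr_ge0 => l' _; exact: g0.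
Qed.

Let N := #|{: I * J}|.
Definition toG (v : 'rV[R]_N) : I -> J -> R := fun i j => v ord0 (enum_rank (i, j)).
Definition fromG (g : I -> J -> R) : 'rV[R]_N := \row_(t < N) g (enum_val t).1 (enum_val t).2.

Lemma toG_fromG g : toG (fromG g) = g.
Proof. by apply: funext => i; apply: funext => j; rewrite /toG /fromG mxE enum_rankK. Qed.

Lemma cont_toG i j : continuous (fun v : 'rV[R]_N => toG v i j).
Proof. exact: coord_continuous. Qed.

Lemma cont_marg l : continuous (fun v : 'rV[R]_N => marg2 (toG v) l).
Proof. apply: cont_sum => i; exact: cont_toG. Qed.

Lemma cont_Gt : continuous (fun v => Gc (toG v)).
Proof.
apply: cont_add.
  apply: cont_sum => i; apply: cont_sum => j; apply: cont_mul; first exact: cst_continuous.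
  exact: cont_toG.
apply: cont_add.
  apply: cont_sum => l v; apply: (@continuous_comp _ _ _ (fun v => marg2 (toG v) l) (fun t => primitive (f l) (clamp t))); first exact: cont_marg.
  apply: (@lip_cont R _ (`|f l 0| + `|f l 1|)); first by rewrite addr_ge0.
  exact: Fc_lip.
apply: cont_mul; first exact: cst_continuous.
apply: cont_sum => a; apply: cont_sum => b.
apply: cont_mul; last exact: cont_marg.
apply: cont_mul; last exact: cont_marg.
exact: cst_continuous.
Qed.


Definition Aset : set 'rV[R]_N :=
  \bigcap_(t in [set: 'I_N]) [set v : 'rV[R]_N | 0 <= v ord0 t] `&`
  \bigcap_(i in [set: I]) ([set v : 'rV[R]_N | \sum_(l : J) toG v i l <= mu i] `&`
                           [set v : 'rV[R]_N | mu i <= \sum_(l : J) toG v i l]).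

Lemma inA v : Aset v <-> Gam (toG v).
Proof.
split.
  move=> [H1 H2]; split.
    by move=> i j; apply: (H1 (enum_rank (i, j))).
  by move=> i; have [a b] := H2 i Logic.I; apply/le_anti; rewrite a b.
move=> [g0 gmu]; split.
  move=> t _ /=; have := g0 (enum_val t).1 (enum_val t).2.
  by rewrite /toG -surjective_pairing enum_valK.
by move=> i _; rewrite /= gmu lexx.
Qed.

Lemma closedA : closed Aset.
Proof.
apply: closedI; apply: closed_bigI => t _.
  apply: (@preimage_closed _ _ (fun v : 'rV[R]_N => v ord0 t) [set x | 0 <= x]).
    by move=> x _; exact: coord_continuous.
  exact: closed_ge.
apply: closedI.
  apply: (@preimage_closed _ _ (fun v : 'rV[R]_N => \sum_(l : J) toG v t l) [set x | x <= mu t]).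
    by move=> x _; apply: cont_sum => l; exact: cont_toG.
  exact: closed_le.
apply: (@preimage_closed _ _ (fun v : 'rV[R]_N => \sum_(l : J) toG v t l) [set x | mu t <= x]).
  by move=> x _; apply: cont_sum => l; exact: cont_toG.
exact: closed_ge.
Qed.

Lemma compactA : compact Aset.
Proof.
have cb := @rV_compact R N (fun=> `[0, 1]%classic) (fun=> @segment_compact R 0 1).
apply: (subclosed_compact closedA cb) => v /inA Gv t /=.
have [a b] := @Gam_le1 (toG v) Gv (enum_val t).1 (enum_val t).2.
have g0 := Gv.1 (enum_val t).1 (enum_val t).2.
move: a b g0; rewrite /toG -surjective_pairing enum_valK => a b g0.
by rewrite in_itv /= g0 (le_trans a b).
Qed.

Lemma exists_min : (0 < #|J|)%N ->
  exists g, Gam g /\ forall g', Gam g' -> Gfun g <= Gfun g'.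
Proof.
case/card_gt0P => j0 _.
pose g0 := fun (i : I) (l : J) => (l == j0)%:R * mu i.
have G0 : Gam g0.
  split; first by move=> i l; rewrite /g0 mulr_ge0.
  move=> i; rewrite /g0 (bigD1 j0) //= eqxx mul1r big1 ?addr0 // => l /negPf ->.
  by rewrite mul0r.
have A0 : Aset !=set0 by exists (fromG g0); apply/inA; rewrite toG_fromG.
have [v vA vmin] := compact_EVT_min A0 compactA (continuous_subspaceT cont_Gt).
have Gv : Gam (toG v) by apply/inA; rewrite inE in vA.
exists (toG v); split => // g' Gg'.
rewrite -Gc_eq // -Gc_eq // -(toG_fromG g').
apply: vmin; rewrite inE; apply/inA; rewrite toG_fromG //.
Qed.

End Ex.
Lemma cont_eps (R : realType) (f : R -> R) x e : 0 <= x -> 0 < e ->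
  {within [set x : R | 0 <= x], continuous f} ->
  exists2 d, 0 < d & forall y, 0 <= y -> `|x - y| < d -> `|f x - f y| < e.
Proof.
move=> x0 e0 fc.
have /subspace_continuousP /(_ x x0) := fc.
move/cvgrPdist_lt => /(_ e e0).
rewrite /within /= => /nbhs_ballP [d /= d0 H].
exists d => // y y0 xy; apply: (H y) => //.
Qed.

Section VarA.
Variables (R : realType) (I J : finType).

Lemma sum_delta (T : finType) (a : T) (F : T -> R) :
  \sum_(l : T) (l == a)%:R * F l = F a.
Proof.
rewrite (bigD1 a) //= eqxx mul1r big1 ?addr0 // => l /negPf ->; by rewrite mul0r.
Qed.

Lemma sum_d (k j : J) (F : J -> R) :
  \sum_(l : J) ((l == k)%:R - (l == j)%:R) * F l = F k - F j.
Proof.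
under eq_bigr do rewrite mulrBl.
by rewrite sumrB !sum_delta.
Qed.


Lemma varA (mu : I -> R) (c : I -> J -> R) (f : J -> R -> R) (phi : J -> J -> R) :
  (forall j, {in `[0, +oo[ &, {homo f j : s t / s <= t}}) ->
  (forall j, {within [set x : R | 0 <= x], continuous (f j)}) ->
  (forall k j, phi k j = phi j k) ->
  forall g : I -> J -> R, (forall i j, 0 <= g i j) -> (forall i, \sum_(j : J) g i j = mu i) ->
  (forall g' : I -> J -> R, (forall i j, 0 <= g' i j) -> (forall i, \sum_(j : J) g' i j = mu i) ->
      tcost c g + energy f phi (marg2 g) <= tcost c g' + energy f phi (marg2 g')) ->
  CournotNash mu c f phi g.
Proof.
move=> fnd fc phis g g0 gmu gmin; split; first by []; split; first by [].
move=> i j gij k.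
set nu := marg2 g.
have nu0 l : 0 <= nu l by apply: sumr_ge0 => i' _; exact: g0.
have gnu : g i j <= nu j.
  by rewrite /nu /marg2 (bigD1 i) //= lerDl; apply: sumr_ge0 => i' _; exact: g0.
case: (eqVneq k j) => [->|kj]; first by [].
rewrite leNgt; apply/negP => Hlt.
set del := Psi c f phi nu i j - Psi c f phi nu i k.
have del0 : 0 < del by rewrite subr_gt0.
have del30 : 0 < del / 3 by rewrite divr_gt0.
have [d1 d10 H1] := @cont_eps R (f k) _ _ (nu0 k) del30 (fc k).
have [d2 d20 H2] := @cont_eps R (f j) _ _ (nu0 j) del30 (fc j).
pose d := fun l : J => (l == k)%:R - (l == j)%:R : R.
have dE : forall l, d l = (l == k)%:R - (l == j)%:R by [].
clearbody d.
pose S := 2^-1 * \sum_(a : J) \sum_(b : J) phi a b * d a * d b.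
pose eps := Num.min (Num.min (g i j) (d1 / 2)) (Num.min (d2 / 2) (del / (3 * (`|S| + 1)))).
have S3 : 0 < 3 * (`|S| + 1).
  have := normr_ge0 S; lra.
have eps0 : 0 < eps.
  by rewrite !lt_min gij /=; apply/and3P; split; apply: divr_gt0.
have epsg : eps <= g i j by rewrite !ge_min lexx.
have epsd1 : eps < d1.
  apply: (@le_lt_trans _ _ (d1 / 2)); first by rewrite !ge_min lexx orbT.
  lra.
have epsd2 : eps < d2.
  apply: (@le_lt_trans _ _ (d2 / 2)); first by rewrite !ge_min lexx orbT.
  lra.
have epsS : eps * S < del / 3.
  pose q := del / (3 * (`|S| + 1)).
  have eq : eps <= q by rewrite !ge_min lexx !orbT.
  have q0 : 0 < q by apply: divr_gt0.
  have q1 : q * (`|S| + 1) = del / 3.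
    rewrite /q; field; apply/lt0r_neq0.
    have := normr_ge0 S; lra.
  have h1 : eps * S <= eps * `|S| by apply: ler_wpM2l; [exact: ltW | exact: ler_norm].
  have h2 : eps * `|S| <= q * `|S| by rewrite ler_wpM2r.
  have h3 : q * `|S| < q * (`|S| + 1) by rewrite ltr_pM2l // ltrDl.
  lra.
pose g' := fun (i' : I) (l : J) => g i' l + eps * ((i' == i)%:R * d l).
have g'0 : forall i' l, 0 <= g' i' l.
  move=> i' l; rewrite /g' dE.
  case: (eqVneq i' i) => [->|_]; last by rewrite /= mul0r mulr0 addr0.
  case: (eqVneq l k) => [->|lk].
    rewrite (negbTE kj) /= mulr1n mulr0n subr0 !mul1r mulr1; apply: addr_ge0 => //; exact: ltW.
  case: (eqVneq l j) => [->|lj]; last by rewrite /= mulr0n subrr !mulr0 addr0.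
  rewrite /= mulr1n mulr0n sub0r mul1r; lra.
have sd : \sum_(l : J) d l = 0.
  rewrite -[RHS](subrr 1) -(sum_d k j (fun=> 1)); apply: eq_bigr => l _; by rewrite mulr1 dE.
have g'mu : forall i', \sum_(l : J) g' i' l = mu i'.
  move=> i'; rewrite /g' big_split /= gmu -mulr_sumr -mulr_sumr sd !mulr0 addr0 //.
have m2 : marg2 g' = fun l => nu l + eps * d l.
  apply: funext => l; rewrite /marg2 /g' big_split /= -mulr_sumr.
  by rewrite (sum_delta _ i (fun=> d l)).
have tc : tcost c g' = tcost c g + eps * (c i k - c i j).
  have h : forall i', \sum_(l : J) c i' l * g' i' l =
      \sum_(l : J) c i' l * g i' l + (i' == i)%:R * (eps * (c i' k - c i' j)).
    move=> i'; rewrite /g'.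
    under eq_bigr => l _ do rewrite mulrDr.
    rewrite big_split /=; congr (_ + _).
    rewrite -(sum_d k j (c i')) !mulr_sumr; apply: eq_bigr => l _; rewrite -dE; move: ((i' == i)%:R : R) => x; ring.
  rewrite /tcost (eq_bigr _ (fun i' _ => h i')) big_split /=.
  by rewrite (sum_delta _ i (fun i' => eps * (c i' k - c i' j))).
pose Phi := fun l : J => \sum_(a : J) phi a l * nu a.
have qd : \sum_(a : J) \sum_(b : J) phi a b * (nu a + eps * d a) * (nu b + eps * d b) =
    \sum_(a : J) \sum_(b : J) phi a b * nu a * nu b + 2 * eps * (Phi k - Phi j)
    + eps ^+ 2 * \sum_(a : J) \sum_(b : J) phi a b * d a * d b.
  transitivity (\sum_(a : J) (\sum_(b : J) phi a b * nu a * nu b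
     + eps * \sum_(b : J) (phi a b * d a * nu b) + eps * \sum_(b : J) (phi a b * nu a * d b)
     + eps ^+ 2 * \sum_(b : J) (phi a b * d a * d b))).
    apply: eq_bigr => a _; rewrite !mulr_sumr -!big_split /=.
    by apply: eq_bigr => b _; ring.
  rewrite !big_split /= -!mulr_sumr.
  have X1 : \sum_(a : J) \sum_(b : J) phi a b * d a * nu b = Phi k - Phi j.
    rewrite -(sum_d k j Phi); apply: eq_bigr => a _; rewrite -dE /Phi mulr_sumr.
    by apply: eq_bigr => b _; rewrite phis; ring.
  have X2 : \sum_(a : J) \sum_(b : J) phi a b * nu a * d b = Phi k - Phi j.
    rewrite exchange_big /=.
    rewrite -(sum_d k j Phi); apply: eq_bigr => a _; rewrite -dE /Phi mulr_sumr.
    by apply: eq_bigr => b _; ring.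
  rewrite X1 X2; ring.
have pd : \sum_(l : J) primitive (f l) (nu l + eps * d l) =
    \sum_(l : J) primitive (f l) (nu l)
    + (primitive (f k) (nu k + eps) - primitive (f k) (nu k))
    + (primitive (f j) (nu j - eps) - primitive (f j) (nu j)).
  suff : \sum_(l : J) (primitive (f l) (nu l + eps * d l) - primitive (f l) (nu l)) =
     \sum_(l : J) ((l == k)%:R * (primitive (f l) (nu l + eps) - primitive (f l) (nu l))
        + (l == j)%:R * (primitive (f l) (nu l - eps) - primitive (f l) (nu l))).
    rewrite sumrB big_split /= (sum_delta _ k (fun l => primitive (f l) (nu l + eps) - primitive (f l) (nu l))).
    rewrite (sum_delta _ j (fun l => primitive (f l) (nu l - eps) - primitive (f l) (nu l))).
    move=> h; lra.
  apply: eq_bigr => l _; rewrite dE.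
  case: (eqVneq l k) => [->|lk].
    by rewrite (negbTE kj) /= mulr1n mulr0n subr0 mulr1 mul1r mul0r addr0.
  case: (eqVneq l j) => [->|lj]; last by rewrite /= mulr0n subrr mulr0 addr0 subrr !mul0r addr0.
  by rewrite /= mulr1n mulr0n sub0r mulrN1 mul1r mul0r add0r.
have en : energy f phi (fun l => nu l + eps * d l) = energy f phi nu
    + (primitive (f k) (nu k + eps) - primitive (f k) (nu k))
    + (primitive (f j) (nu j - eps) - primitive (f j) (nu j))
    + eps * (Phi k - Phi j) + eps ^+ 2 * S.
  by rewrite /energy /= pd qd /S; field.
have key := gmin g' g'0 g'mu.
rewrite tc m2 en in key.
have nk : nu k <= nu k + eps by rewrite lerDl ltW.
have Pk := @prim_diff R _ _ _ (fnd k) (fc k) (nu0 k) nk.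
have nj0 : 0 <= nu j - eps by rewrite subr_ge0 (le_trans epsg).
have nj : nu j - eps <= nu j by rewrite lerBlDr lerDl ltW.
have Pj := @prim_diff R _ _ _ (fnd j) (fc j) nj0 nj.
case/andP: Pk => _ Pk. case/andP: Pj => Pj _.
have F1 : f k (nu k + eps) - f k (nu k) < del / 3.
  have := H1 (nu k + eps) (le_trans (nu0 k) nk).
  rewrite opprD addNKr normrN gtr0_norm // => /(_ epsd1).
  by rewrite -normrN opprB => /(le_lt_trans (ler_norm _)).
have F2 : f j (nu j) - f j (nu j - eps) < del / 3.
  have := H2 (nu j - eps) nj0.
  rewrite opprB addrC subrK gtr0_norm // => /(_ epsd2).
  by move=> /(le_lt_trans (ler_norm _)).
have M1 : eps * (f k (nu k + eps) - f k (nu k)) < eps * (del / 3) by rewrite ltr_pM2l.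
have M2 : eps * (f j (nu j) - f j (nu j - eps)) < eps * (del / 3) by rewrite ltr_pM2l.
have M3 : eps * (eps * S) < eps * (del / 3) by rewrite ltr_pM2l.
have dd : del = c i j + f j (nu j) + Phi j - (c i k + f k (nu k) + Phi k) by [].
move: key; rewrite /= -/nu.
rewrite expr2.
nra.
Qed.
End VarA.
Section P1.
Variables (R : realType) (I J : finType).
Lemma MK_le (mu : I -> R) (c : I -> J -> R) (nu : J -> R) (g : I -> J -> R) :
  (forall i, 0 <= mu i) -> \sum_(i : I) mu i = 1 -> plans mu nu g -> MK mu c nu <= tcost c g.
Proof.
move=> mu0 mu1 pg; rewrite /MK; apply: ge_inf; last by exists g.
exists (- \sum_(i : I) \sum_(j : J) `|c i j|) => x [g' [g'0 [g'mu _]] <-].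
rewrite /tcost -sumrN; apply: ler_sum => i _; rewrite -sumrN; apply: ler_sum => j _.
have g1 : g' i j <= 1.
  apply: (@le_trans _ _ (mu i)).
    by rewrite -g'mu (bigD1 j) //= lerDl; apply: sumr_ge0 => l _; exact: g'0.
  by rewrite -mu1 (bigD1 i) //= lerDl; apply: sumr_ge0 => l _; exact: mu0.
have h1 := ler_norm (- c i j); rewrite normrN in h1.
have h2 := normr_ge0 (c i j).
have h3 := g'0 i j.
nra.
Qed.
End P1.

Theorem mainTheorem1 (R : realType) (I J : finType)
  (mu : I -> R) (c : I -> J -> R) (f : J -> R -> R) (phi : J -> J -> R)
  (mu_ge0 : forall i, 0 <= mu i) (mu_sum : \sum_(i : I) mu i = 1)
  (f_nondecr : forall j, {in `[0, +oo[ &, {homo f j : s t / s <= t}})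
  (f_cont : forall j, {within [set x : R | 0 <= x], continuous (f j)})
  (phi_sym : forall k j, phi k j = phi j k) :
  (forall (nu : J -> R) (g : I -> J -> R),
     probvec nu ->
     (forall nu', probvec nu' ->
        MK mu c nu + energy f phi nu <= MK mu c nu' + energy f phi nu') ->
     plans mu nu g ->
     tcost c g = MK mu c nu ->
     CournotNash mu c f phi g)
  /\ ((0 < #|J|)%N -> exists g : I -> J -> R, CournotNash mu c f phi g).
Proof.
split.
  move=> nu g pnu hmin pg tg.
  have [pg0 [pgmu pgnu]] := pg.
  apply: (@varA R I J mu c f phi f_nondecr f_cont phi_sym g pg0 pgmu) => g' g'0 g'mu.
  have m2 : marg2 g = nu by apply: funext => l; exact: pgnu l.
  rewrite m2 tg.
  have pv : probvec (marg2 g').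
    split; first by move=> l; apply: sumr_ge0 => i _; exact: g'0.
    rewrite /marg2 exchange_big /=.
    by rewrite (eq_bigr _ (fun i _ => g'mu i)).
  apply: (le_trans (hmin _ pv)); rewrite lerD2r.
  by apply: MK_le.
move=> J0.
have [g [Gg gmin]] := @exists_min R I J mu c f phi mu_ge0 mu_sum f_nondecr f_cont J0.
exists g.
apply: (@varA R I J mu c f phi f_nondecr f_cont phi_sym g Gg.1 Gg.2).
by move=> g' a b; apply: gmin.
Qed.
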